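(* Let $f:\mathbb{R}^m\times\mathbb{R}^n\to\mathbb{R}$ satisfy the standing assumption described in the context, and let $\kappa=L_1/\mu$. Define $G(x,y)=\big[\nabla_{11} f - \nabla_{12} f (\nabla_{22} f)^{-1} \nabla_{21} f\big](x,y)$. Then: (1) $G$ is Lipschitz continuous on $\mathbb{R}^{m+n}$ (with respect to the Euclidean norm on $(x,y)$ and the spectral norm on matrices) with constant $L_G=L_2(1+\kappa)^2$; (2) the envelope function $\Phi(x)=\max_{y\in\mathbb{R}^n} f(x,y)$ is twice differentiable with $\nabla^2\Phi(x)=G(x,y^*(x))$ for all $x\in\mathbb{R}^m$, where $y^*(x)=\arg\max_{y} f(x,y)$, and $\nabla^2\Phi$ is Lipschitz continuous with constant $L_\Phi=L_G(1+\kappa)=L_2(1+\kappa)^3$.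
   Context: Standing assumption: $f:\mathbb{R}^m\times\mathbb{R}^n\to\mathbb{R}$ is twice continuously differentiable and (i) $\nabla f$ is $L_1$-Lipschitz on $\mathbb{R}^{m+n}$, and for every fixed $x$ the map $y\mapsto f(x,y)$ is $\mu$-strongly concave ($\mu>0$); (ii) the Jacobian blocks $\nabla_{11} f,\nabla_{12} f,\nabla_{21} f,\nabla_{22} f$, viewed as functions of $(x,y)$, are $L_2$-Lipschitz (Euclidean norm on $(x,y)$, spectral norm on matrices); (iii) $\Phi(x):=\max_{y\in\mathbb{R}^n}f(x,y)$ is bounded below and has compact sub-level sets. Notation: $\nabla_1 f,\nabla_2 f$ are the partial gradients in $x$ and $y$; $\nabla_{11}f$, $\nabla_{22}f$ are the partial Hessians in $x$ and $y$; $\nabla_{12}f\in\mathbb{R}^{m\times n}$ is the Jacobian of $\nabla_1 f$ with respect to $y$ and $\nabla_{21}f\in\mathbb{R}^{n\times m}$ is the Jacobian of $\nabla_2 f$ with respect to $x$. By strong concavity, $y^*(x)=\arg\max_y f(x,y)$ is unique, and $\nabla_{22}f$ is invertible. *)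

(* Defs.v *)
From HB Require Import structures.
From mathcomp Require Import all_boot all_order all_algebra.
From mathcomp Require Import all_classical all_reals all_analysis.
Set Implicit Arguments. Unset Strict Implicit. Unset Printing Implicit Defensive.
Import Order.TTheory GRing.Theory Num.Theory.
Import numFieldNormedType.Exports.
Local Open Scope classical_set_scope.
Local Open Scope ring_scope.

Section Defs.
Variable R : realType.

Definition enorm k (v : 'cV[R]_k) : R := Num.sqrt (\sum_i (v i 0) ^+ 2).

(* Euclidean norm of the pair (x,y), i.e. of the concatenated vector in R^(m+n) *)
Definition pnorm m n (x : 'cV[R]_m) (y : 'cV[R]_n) : R :=
  Num.sqrt (enorm x ^+ 2 + enorm y ^+ 2).

Definition opnorm p q (A : 'M[R]_(p, q)) : R :=
  sup [set enorm (A *m v) | v in [set v : 'cV[R]_q | enorm v <= 1]].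

Definition ebasis k (i : 'I_k) : 'cV[R]_k := delta_mx i 0.

Variables (m n : nat).
Implicit Type f : 'cV[R]_m -> 'cV[R]_n -> R.

Definition grad1 f x y : 'cV[R]_m :=
  \col_i derive (fun x' => f x' y) x (ebasis i).
Definition grad2 f x y : 'cV[R]_n :=
  \col_j derive (fun y' => f x y') y (ebasis j).

Definition hess11 f x y : 'M[R]_(m, m) :=
  \matrix_(i, k) derive (fun x' => grad1 f x' y i 0) x (ebasis k).
Definition hess12 f x y : 'M[R]_(m, n) :=
  \matrix_(i, j) derive (fun y' => grad1 f x y' i 0) y (ebasis j).
Definition hess21 f x y : 'M[R]_(n, m) :=
  \matrix_(j, i) derive (fun x' => grad2 f x' y j 0) x (ebasis i).
Definition hess22 f x y : 'M[R]_(n, n) :=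
  \matrix_(j, l) derive (fun y' => grad2 f x y' j 0) y (ebasis l).

Definition fjoint f (p : 'cV[R]_m * 'cV[R]_n) : R := f p.1 p.2.
Definition gradjoint f (p : 'cV[R]_m * 'cV[R]_n) : 'cV[R]_m * 'cV[R]_n :=
  (grad1 f p.1 p.2, grad2 f p.1 p.2).

Definition C2 f : Prop :=
  (forall p, differentiable (fjoint f) p) /\
  (forall p, differentiable (gradjoint f) p) /\
  continuous (fun p : 'cV[R]_m * 'cV[R]_n => hess11 f p.1 p.2) /\
  continuous (fun p : 'cV[R]_m * 'cV[R]_n => hess12 f p.1 p.2) /\
  continuous (fun p : 'cV[R]_m * 'cV[R]_n => hess21 f p.1 p.2) /\
  continuous (fun p : 'cV[R]_m * 'cV[R]_n => hess22 f p.1 p.2).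

Definition strongly_concave (mu : R) (g : 'cV[R]_n -> R) : Prop :=
  forall y y' (t : R), 0 <= t <= 1 ->
    t * g y + (1 - t) * g y' + mu / 2 * t * (1 - t) * enorm (y - y') ^+ 2
      <= g (t *: y + (1 - t) *: y').

Definition Phi f (x : 'cV[R]_m) : R := sup (range (f x)).

Definition Gmat f x y : 'M[R]_(m, m) :=
  hess11 f x y - hess12 f x y *m invmx (hess22 f x y) *m hess21 f x y.

Definition standing_assumption f (L1 L2 mu : R) : Prop :=
  C2 f /\
  (forall x y x' y',
     pnorm (grad1 f x y - grad1 f x' y') (grad2 f x y - grad2 f x' y')
       <= L1 * pnorm (x - x') (y - y')) /\
  0 < mu /\ (forall x, strongly_concave mu (f x)) /\
  (forall x y x' y',
     opnorm (hess11 f x y - hess11 f x' y') <= L2 * pnorm (x - x') (y - y') /\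
     opnorm (hess12 f x y - hess12 f x' y') <= L2 * pnorm (x - x') (y - y') /\
     opnorm (hess21 f x y - hess21 f x' y') <= L2 * pnorm (x - x') (y - y') /\
     opnorm (hess22 f x y - hess22 f x' y') <= L2 * pnorm (x - x') (y - y')) /\
  (exists b, forall x, b <= Phi f x) /\
  (forall c, compact [set x | Phi f x <= c]).

Definition gradx (g : 'cV[R]_m -> R) x : 'cV[R]_m := \col_i derive g x (ebasis i).
Definition hessx (g : 'cV[R]_m -> R) x : 'M[R]_(m, m) :=
  \matrix_(i, k) derive (fun x' => gradx g x' i 0) x (ebasis k).

End Defs.

(* Main.v *)
Require Import Defs.
From HB Require Import structures.
From mathcomp Require Import all_boot all_order all_algebra.
From mathcomp Require Import all_classical all_reals all_analysis.
From mathcomp Require Import ring lra.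
Set Implicit Arguments. Unset Strict Implicit. Unset Printing Implicit Defensive.
Import Order.TTheory GRing.Theory Num.Theory.
Import numFieldNormedType.Exports.
Local Open Scope classical_set_scope.
Local Open Scope ring_scope.

Section Vec.
Variable R : realType.

Lemma sq_le (x y : R) : 0 <= y -> x ^+ 2 <= y ^+ 2 -> x <= y.
Proof.
move=> y0 h; apply: (le_trans (ler_norm x)).
by rewrite -sqrtr_sqr -(ger0_norm y0) -sqrtr_sqr ler_wsqrtr.
Qed.

Lemma CS_sum k (a b : 'I_k -> R) :
  (\sum_i a i * b i) ^+ 2 <= (\sum_i a i ^+ 2) * (\sum_i b i ^+ 2).
Proof.
set A := \sum_i a i ^+ 2; set B := \sum_i b i ^+ 2; set C := \sum_i a i * b i.
have B0 : 0 <= B by apply: sumr_ge0 => i _; exact: sqr_ge0.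
have A0 : 0 <= A by apply: sumr_ge0 => i _; exact: sqr_ge0.
have [Bz|Bnz] := eqVneq B 0.
  have bz := psumr_eq0P (fun i _ => sqr_ge0 (b i)) Bz.
  have -> : C = 0.
    rewrite /C big1 // => i _.
    have /eqP -> : b i == 0 by rewrite -sqrf_eq0 bz.
    by rewrite mulr0.
  by rewrite expr0n /= mulr_ge0.
have Bp : 0 < B by rewrite lt_def Bnz B0.
set t := C / B.
have E : \sum_i (a i - t * b i) ^+ 2 = A - (t *+ 2) * C + t ^+ 2 * B.
  rewrite /A /B /C !mulr_sumr -sumrB -big_split /=.
  by apply: eq_bigr => i _; ring.
have h : 0 <= A - (t *+ 2) * C + t ^+ 2 * B.
  by rewrite -E; apply: sumr_ge0 => i _; exact: sqr_ge0.
have Ct : C = t * B by rewrite /t divfK.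
rewrite Ct in h *; nra.
Qed.

Definition dot k (u v : 'cV[R]_k) := \sum_i u i 0 * v i 0.

Lemma dotC k (u v : 'cV[R]_k) : dot u v = dot v u.
Proof. by apply: eq_bigr => i _; rewrite mulrC. Qed.

Lemma dotDl k (u v w : 'cV[R]_k) : dot (u + v) w = dot u w + dot v w.
Proof. by rewrite /dot -big_split; apply: eq_bigr => i _; rewrite mxE mulrDl. Qed.

Lemma dotZl k a (u w : 'cV[R]_k) : dot (a *: u) w = a * dot u w.
Proof. by rewrite /dot mulr_sumr; apply: eq_bigr => i _; rewrite mxE mulrA. Qed.

Lemma dotNl k (u w : 'cV[R]_k) : dot (- u) w = - dot u w.
Proof. by rewrite -scaleN1r dotZl mulN1r. Qed.

Lemma dotBl k (u v w : 'cV[R]_k) : dot (u - v) w = dot u w - dot v w.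
Proof. by rewrite dotDl dotNl. Qed.

Lemma dotDr k (u v w : 'cV[R]_k) : dot w (u + v) = dot w u + dot w v.
Proof. by rewrite dotC dotDl !(dotC w). Qed.

Lemma dotZr k a (u w : 'cV[R]_k) : dot w (a *: u) = a * dot w u.
Proof. by rewrite dotC dotZl dotC. Qed.

Lemma dotNr k (u w : 'cV[R]_k) : dot w (- u) = - dot w u.
Proof. by rewrite dotC dotNl dotC. Qed.

Lemma dotBr k (u v w : 'cV[R]_k) : dot w (u - v) = dot w u - dot w v.
Proof. by rewrite dotDr dotNr. Qed.

Lemma dot0l k (w : 'cV[R]_k) : dot 0 w = 0.
Proof. by rewrite /dot big1 // => i _; rewrite mxE mul0r. Qed.

Lemma dot0r k (w : 'cV[R]_k) : dot w 0 = 0.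
Proof. by rewrite dotC dot0l. Qed.

Lemma dot_ge0 k (v : 'cV[R]_k) : 0 <= dot v v.
Proof. by apply: sumr_ge0 => i _; rewrite -expr2 sqr_ge0. Qed.

Lemma enormE k (v : 'cV[R]_k) : enorm v = Num.sqrt (dot v v).
Proof. by rewrite /enorm /dot; congr Num.sqrt; apply: eq_bigr => i _; rewrite expr2. Qed.

Lemma enorm_ge0 k (v : 'cV[R]_k) : 0 <= enorm v.
Proof. exact: sqrtr_ge0. Qed.

Lemma enorm_sq k (v : 'cV[R]_k) : enorm v ^+ 2 = dot v v.
Proof. by rewrite enormE sqr_sqrtr // dot_ge0. Qed.

Lemma dot_CS k (u v : 'cV[R]_k) : `|dot u v| <= enorm u * enorm v.
Proof.
rewrite -sqrtr_sqr /enorm -sqrtrM; last by apply: sumr_ge0 => i _; exact: sqr_ge0.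
by apply: ler_wsqrtr; exact: CS_sum.
Qed.

Lemma dot_CS' k (u v : 'cV[R]_k) : dot u v <= enorm u * enorm v.
Proof. exact: le_trans (ler_norm _) (dot_CS _ _). Qed.

Lemma enormD k (u v : 'cV[R]_k) : enorm (u + v) <= enorm u + enorm v.
Proof.
apply: sq_le; first by rewrite addr_ge0 ?enorm_ge0.
rewrite enorm_sq dotDl !dotDr (dotC v u) sqrrD !enorm_sq.
have := dot_CS' u v; nra.
Qed.

Lemma enormZ k a (v : 'cV[R]_k) : enorm (a *: v) = `|a| * enorm v.
Proof.
rewrite !enormE dotZl dotZr mulrA -expr2 sqrtrM ?sqr_ge0 //.
by rewrite sqrtr_sqr.
Qed.

Lemma enormN k (v : 'cV[R]_k) : enorm (- v) = enorm v.
Proof. by rewrite -scaleN1r enormZ normrN normr1 mul1r. Qed.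

Lemma enormB k (u v : 'cV[R]_k) : enorm (u - v) = enorm (v - u).
Proof. by rewrite -enormN opprB. Qed.

Lemma enorm0 k : enorm (0 : 'cV[R]_k) = 0.
Proof. by rewrite enormE dot0l sqrtr0. Qed.

Lemma enorm_eq0 k (v : 'cV[R]_k) : enorm v = 0 -> v = 0.
Proof.
move=> /eqP; rewrite /enorm sqrtr_eq0 => h.
have h0 : \sum_i v i 0 ^+ 2 = 0.
  by apply/eqP; rewrite eq_le h sumr_ge0 // => i _; exact: sqr_ge0.
have := psumr_eq0P (fun i _ => sqr_ge0 (v i 0)) h0.
move=> hz; apply/matrixP => i j; rewrite (ord1 j) mxE.
by apply/eqP; rewrite -sqrf_eq0 hz.
Qed.

Lemma enorm_sub0 k (v : 'cV[R]_k) : enorm (v - v) = 0.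
Proof. by rewrite subrr enorm0. Qed.

Lemma entry_le_norm p q (M : 'M[R]_(p, q)) i j : `|M i j| <= `|M|.
Proof.
have -> : `|M| = mx_norm M by [].
rewrite mx_normrE; apply/bigmax_geP; right => /=.
by exists (i, j).
Qed.

Lemma norm_le_enorm k (v : 'cV[R]_k) : `|v| <= enorm v.
Proof.
have -> : `|v| = mx_norm v by [].
rewrite mx_normrE; apply/bigmax_leP; split => /=.
  exact: enorm_ge0.
move=> [i j] _ /=; rewrite (ord1 j) -sqrtr_sqr /enorm; apply: ler_wsqrtr.
rewrite (bigD1 i) //= lerDl; apply: sumr_ge0 => l _; exact: sqr_ge0.
Qed.

Lemma enorm_le_norm k (v : 'cV[R]_k) : enorm v <= k%:R * `|v|.
Proof.
apply: sq_le; first by rewrite mulr_ge0.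
rewrite enorm_sq /dot.
have h1 : \sum_i v i 0 * v i 0 <= \sum_(i < k) `|v| ^+ 2.
  apply: ler_sum => i _; rewrite -expr2 -real_normK ?num_real //.
  by rewrite lerXn2r ?nnegrE ?normr_ge0 // entry_le_norm.
apply: (le_trans h1); rewrite sumr_const card_ord -mulr_natl.
have hk : (k%:R : R) = 0 \/ 1 <= (k%:R : R).
  by case: k {v h1} => [|k]; [left | right; rewrite ler1n].
have := normr_ge0 v; have := sqr_ge0 `|v|; nra.
Qed.

Lemma pnorm_ge0 p q (a : 'cV[R]_p) (b : 'cV[R]_q) : 0 <= pnorm a b.
Proof. exact: sqrtr_ge0. Qed.

Lemma pnorm_sq p q (a : 'cV[R]_p) (b : 'cV[R]_q) :
  pnorm a b ^+ 2 = enorm a ^+ 2 + enorm b ^+ 2.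
Proof. by rewrite sqr_sqrtr // addr_ge0 ?sqr_ge0. Qed.

Lemma enorm_le_pnorm1 p q (a : 'cV[R]_p) (b : 'cV[R]_q) : enorm a <= pnorm a b.
Proof. by apply: sq_le; rewrite ?pnorm_ge0 // pnorm_sq lerDl sqr_ge0. Qed.

Lemma enorm_le_pnorm2 p q (a : 'cV[R]_p) (b : 'cV[R]_q) : enorm b <= pnorm a b.
Proof. by apply: sq_le; rewrite ?pnorm_ge0 // pnorm_sq lerDr sqr_ge0. Qed.

Lemma pnorm_le_add p q (a : 'cV[R]_p) (b : 'cV[R]_q) :
  pnorm a b <= enorm a + enorm b.
Proof.
apply: sq_le; first by rewrite addr_ge0 ?enorm_ge0.
rewrite pnorm_sq; have := enorm_ge0 a; have := enorm_ge0 b; nra.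
Qed.

Lemma pnorm0l p q (b : 'cV[R]_q) : pnorm (0 : 'cV[R]_p) b = enorm b.
Proof. by rewrite /pnorm enorm0 expr0n add0r sqrtr_sqr ger0_norm ?enorm_ge0. Qed.

Lemma pnorm0r p q (a : 'cV[R]_p) : pnorm a (0 : 'cV[R]_q) = enorm a.
Proof. by rewrite /pnorm enorm0 expr0n addr0 sqrtr_sqr ger0_norm ?enorm_ge0. Qed.

Definition frob p q (A : 'M[R]_(p, q)) := Num.sqrt (\sum_i \sum_j A i j ^+ 2).

Lemma enorm_mul_frob p q (A : 'M[R]_(p, q)) v :
  enorm (A *m v) <= frob A * enorm v.
Proof.
rewrite /frob /enorm -sqrtrM; last by do 2 (apply: sumr_ge0 => ? _); exact: sqr_ge0.
apply: ler_wsqrtr; rewrite mulr_suml; apply: ler_sum => i _.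
rewrite mxE; exact: CS_sum.
Qed.

Definition opset p q (A : 'M[R]_(p, q)) :=
  [set enorm (A *m v) | v in [set v : 'cV[R]_q | enorm v <= 1]].

Lemma opset_has_sup p q (A : 'M[R]_(p, q)) : has_sup (opset A).
Proof.
split; first by exists 0; exists 0; rewrite /= ?enorm0 ?mulmx0 ?enorm0.
exists (frob A) => y [v /= v1 <-].
apply: (le_trans (enorm_mul_frob A v)).
by rewrite -{2}(mulr1 (frob A)) ler_wpM2l // sqrtr_ge0.
Qed.

Lemma opnorm_ge0 p q (A : 'M[R]_(p, q)) : 0 <= opnorm A.
Proof.
apply: sup_upper_bound; first exact: opset_has_sup.
by exists 0; rewrite /= ?enorm0 ?mulmx0 ?enorm0.
Qed.

Lemma opnorm_le p q (A : 'M[R]_(p, q)) v : enorm (A *m v) <= opnorm A * enorm v.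
Proof.
have [->|v0] := eqVneq v 0; first by rewrite mulmx0 !enorm0 mulr0.
have ev : 0 < enorm v.
  by rewrite lt_def enorm_ge0 andbT; apply/eqP => /enorm_eq0 /eqP; rewrite (negPf v0).
have h : enorm (A *m ((enorm v)^-1 *: v)) <= opnorm A.
  apply: sup_upper_bound; first exact: opset_has_sup.
  exists ((enorm v)^-1 *: v) => //=.
  by rewrite enormZ ger0_norm ?invr_ge0 ?enorm_ge0 // mulVf // gt_eqF.
move: h; rewrite -scalemxAr enormZ ger0_norm ?invr_ge0 ?enorm_ge0 //.
by rewrite mulrC ler_pdivrMr // => ->.
Qed.

Lemma opnorm_lub p q (A : 'M[R]_(p, q)) c :
  0 <= c -> (forall v, enorm (A *m v) <= c * enorm v) -> opnorm A <= c.
Proof.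
move=> c0 h; apply: ge_sup; first by exists 0; exists 0; rewrite /= ?enorm0 ?mulmx0 ?enorm0.
move=> y [v /= v1 <-]; apply: (le_trans (h v)).
by rewrite -{2}(mulr1 c) ler_wpM2l.
Qed.

Lemma opnormD p q (A B : 'M[R]_(p, q)) : opnorm (A + B) <= opnorm A + opnorm B.
Proof.
apply: opnorm_lub; first by rewrite addr_ge0 ?opnorm_ge0.
move=> v; rewrite mulmxDl mulrDl; apply: (le_trans (enormD _ _)).
by rewrite lerD ?opnorm_le.
Qed.

Lemma opnormN p q (A : 'M[R]_(p, q)) : opnorm (- A) = opnorm A.
Proof.
have h (B : 'M[R]_(p, q)) : opnorm (- B) <= opnorm B.
  apply: opnorm_lub; first exact: opnorm_ge0.
  by move=> v; rewrite mulNmx enormN opnorm_le.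
by apply/eqP; rewrite eq_le h /= -{1}(opprK A) h.
Qed.

Lemma opnormB p q (A B : 'M[R]_(p, q)) : opnorm (A - B) <= opnorm A + opnorm B.
Proof. by rewrite -(opnormN B); exact: opnormD. Qed.

Lemma opnormM p q r (A : 'M[R]_(p, q)) (B : 'M[R]_(q, r)) :
  opnorm (A *m B) <= opnorm A * opnorm B.
Proof.
apply: opnorm_lub; first by rewrite mulr_ge0 ?opnorm_ge0.
move=> v; rewrite -mulmxA; apply: (le_trans (opnorm_le _ _)).
by rewrite -mulrA ler_wpM2l ?opnorm_ge0 ?opnorm_le.
Qed.

Lemma opnorm0 p q : opnorm (0 : 'M[R]_(p, q)) = 0.
Proof.
apply/eqP; rewrite eq_le opnorm_ge0 andbT; apply: opnorm_lub => // v.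
by rewrite mul0mx enorm0 mul0r.
Qed.

End Vec.

Section Anal.
Variable R : realType.

Section P. Variables (U V : normedModType R).
Lemma pairD (a c : U) (b d : V) : (a, b) + (c, d) = (a + c, b + d). Proof. by []. Qed.
Lemma pairZ (t : R) (a : U) (b : V) : t *: (a, b) = (t *: a, t *: b). Proof. by []. Qed.
Lemma pairN (a : U) (b : V) : - (a, b) = (- a, - b). Proof. by []. Qed.
Lemma pairB (a c : U) (b d : V) : (a, b) - (c, d) = (a - c, b - d). Proof. by []. Qed.
Lemma fst_sum I (r : seq I) (F : I -> U * V) : (\sum_(i <- r) F i).1 = \sum_(i <- r) (F i).1.
Proof. by apply: (big_morph (fun z : U * V => z.1)). Qed.
Lemma snd_sum I (r : seq I) (F : I -> U * V) : (\sum_(i <- r) F i).2 = \sum_(i <- r) (F i).2.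
Proof. by apply: (big_morph (fun z : U * V => z.2)). Qed.
Lemma norm_fst (z : U * V) : `|z.1| <= `|z|.
Proof. by rewrite prod_normE le_max lexx. Qed.
Lemma norm_snd (z : U * V) : `|z.2| <= `|z|.
Proof. by rewrite prod_normE le_max lexx orbT. Qed.
End P.

Lemma dlittle (V W : normedModType R) (F : V -> W) p :
  differentiable F p -> forall e, 0 < e -> exists2 d, 0 < d &
    forall h, `|h| < d -> `|F (p + h) - F p - 'd F p h| <= e * `|h|.
Proof.
move=> /diff_locally /eqaddoP h e e0.
have /nbhs_norm0P [d d0 Hd] := h e e0.
exists d => // z zd; have := Hd z zd.
suff -> : F (p + z) - F p - 'd F p z = (F \o shift p - (cst (F p) + 'd F p)) z by [].
by rewrite [p + z]addrC /= opprD addrA.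
Qed.

Lemma dquot (V W : normedModType R) (F : V -> W) p w : differentiable F p ->
  forall e, 0 < e -> exists2 d, 0 < d & forall t : R, 0 < `|t| < d ->
    `|t^-1 *: (F (p + t *: w) - F p) - 'd F p w| <= e.
Proof.
move=> dF e e0.
have w1 : 0 < `|w| + 1 by rewrite ltr_pwDr.
have e'0 : 0 < e / (`|w| + 1) by rewrite divr_gt0.
have [d d0 Hd] := dlittle dF e'0.
exists (d / (`|w| + 1)); first by rewrite divr_gt0.
move=> t /andP[t0 td].
have tw : `|t *: w| < d.
  rewrite normrZ; apply: (le_lt_trans _ (_ : `|t| * (`|w| + 1) < d)).
    by rewrite ler_wpM2l // lerDl.
  by rewrite -ltr_pdivlMr.
have -> : t^-1 *: (F (p + t *: w) - F p) - 'd F p w =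
          t^-1 *: (F (p + t *: w) - F p - 'd F p (t *: w)).
  rewrite linearZ /= [in RHS]scalerBr scalerA mulVf ?scale1r //.
  by rewrite -normr_gt0.
rewrite normrZ normfV; have := Hd _ tw.
rewrite normrZ => H.
rewrite -(ler_pM2l t0) mulrA mulfV ?mul1r; last by rewrite gt_eqF.
apply: (le_trans H).
rewrite mulrCA ler_wpM2l ?normr_ge0 // mulrAC ler_pdivrMr //.
by apply: ler_wpM2l; [exact: ltW | rewrite lerDl].
Qed.

Lemma derive_via (U V W : normedModType R) (g : U -> R) a v (G : V -> W) p w
  (pi : W -> R) :
  differentiable G p ->
  (forall z1 z2, pi (z1 - z2) = pi z1 - pi z2) ->
  (forall s z, pi (s *: z) = s * pi z) ->
  (forall z, `|pi z| <= `|z|) ->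
  (forall t : R, g (t *: v + a) = pi (G (p + t *: w))) ->
  g a = pi (G p) ->
  derive g a v = pi ('d G p w).
Proof.
move=> dG piB piZ pile hg ha.
rewrite /derive; apply: cvg_lim => //.
apply/cvgrPdist_le => e e0.
have [d d0 Hd] := dquot w dG e0.
apply/nbhs_ballP; exists d => // t Bt tn0.
move: Bt; rewrite -ball_normE /= sub0r normrN => Bt.
rewrite hg ha -piB -[t^-1 *: _]/(t^-1 * _) -piZ -piB.
apply: (le_trans (pile _)); rewrite distrC; apply: Hd.
by rewrite Bt normr_gt0 tn0.
Qed.

Lemma bounded_cont (V W : normedModType R) (L : {linear V -> W}) C :
  (forall v, `|L v| <= C * `|v|) -> continuous L.
Proof.
move=> hC; apply: bounded_linear_continuous; apply/linear_boundedP.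
near=> r => x; apply: (le_trans (hC x)); apply: ler_wpM2r; first exact: normr_ge0.
by near: r; apply: nbhs_pinfty_ge; exact: num_real.
Unshelve. all: by end_near. Qed.

Lemma diff_build (V W : normedModType R) (F : V -> W) x (L : {linear V -> W}) :
  continuous L ->
  (forall e, 0 < e -> exists2 d, 0 < d & forall h, `|h| < d ->
      `|F (x + h) - F x - L h| <= e * `|h|) ->
  differentiable F x /\ 'd F x = L :> (V -> W).
Proof.
move=> Lc H.
have E : F \o shift x = cst (F x) + L +o_ 0 id.
  apply/eqaddoP => e e0; have [d d0 Hd] := H e e0.
  apply/nbhs_norm0P; exists d => // h /= hd.
  suff -> : (F \o shift x - (cst (F x) + L)) h = F (x + h) - F x - L h by exact: Hd.
  by rewrite [x + h]addrC /= opprD addrA.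
have dE := diff_unique Lc E.
split => //; apply/diff_locallyP; rewrite dE; split => //.
Qed.

End Anal.

Section Lims.
Variable R : realType.

Lemma small_pos (a b : R) : 0 < a -> 0 < b -> exists t, [/\ 0 < t, t < a & t < b].
Proof.
move=> a0 b0; exists (Num.min a b / 2).
have mp : 0 < Num.min a b by rewrite lt_min a0 b0.
have h : Num.min a b / 2 < Num.min a b by rewrite ltr_pdivrMr // ltr_pMr // ltr1n.
split; first by rewrite divr_gt0.
  by apply: (lt_le_trans h); rewrite ge_min lexx.
by apply: (lt_le_trans h); rewrite ge_min lexx orbT.
Qed.

Lemma lim_upper (q : R -> R) (D c K : R) :
  (forall e, 0 < e -> exists2 d, 0 < d & forall t, 0 < t < d -> `|q t - D| <= e) ->
  (forall t, 0 < t < 1 -> q t <= c + K * t) -> D <= c.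
Proof.
move=> hq hb; apply/ler_addgt0Pr => e e0.
have e2 : 0 < e / 2 by rewrite divr_gt0.
have [d d0 Hd] := hq _ e2.
have K1 : 0 < `|K| + 1 by rewrite ltr_pwDr.
have eK : 0 < e / 2 / (`|K| + 1) by rewrite divr_gt0.
have m0 : 0 < Num.min 1 (e / 2 / (`|K| + 1)) by rewrite lt_min ltr01 eK.
have [t [t0 td tm]] := small_pos d0 m0.
move: tm; rewrite lt_min => /andP[t1 tK].
have h1 := Hd t (introT andP (conj t0 td)).
have h2 := hb t (introT andP (conj t0 t1)).
have h3 : K * t <= e / 2.
  apply: (le_trans (ler_norm _)); rewrite normrM (gtr0_norm t0).
  apply: (le_trans (_ : _ <= (`|K| + 1) * t)); first by apply: ler_wpM2r; [exact: ltW | rewrite lerDl].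
  by rewrite mulrC -ler_pdivlMr // ltW.
move: h1; rewrite ler_norml => /andP[h1 _].
lra.
Qed.

Lemma lim_lower (q : R -> R) (D c K : R) :
  (forall e, 0 < e -> exists2 d, 0 < d & forall t, 0 < t < d -> `|q t - D| <= e) ->
  (forall t, 0 < t < 1 -> c - K * t <= q t) -> c <= D.
Proof.
move=> hq hb; rewrite -lerN2.
apply: (@lim_upper (fun t => - q t) (- D) (- c) K).
  move=> e e0; have [d d0 Hd] := hq e e0; exists d => // t td.
  by rewrite -opprD normrN; exact: Hd.
by move=> t t01; rewrite lerNl opprD opprK; exact: hb.
Qed.

Lemma dlim_upper (V W : normedModType R) (G : V -> W) p w (N : W -> R) C c K :
  differentiable G p -> 0 <= C ->
  (forall z1 z2, `|N z1 - N z2| <= C * `|z1 - z2|) ->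
  (forall t, 0 < t < 1 -> N (t^-1 *: (G (p + t *: w) - G p)) <= c + K * t) ->
  N ('d G p w) <= c.
Proof.
move=> dG C0 NL hb.
apply: (lim_upper (q := fun t => N (t^-1 *: (G (p + t *: w) - G p)))) hb.
move=> e e0.
have C1 : 0 < C + 1 by lra.
have [d d0 Hd] := dquot w dG (divr_gt0 e0 C1).
exists d => // t /andP[t0 td].
have h : `|t^-1 *: (G (p + t *: w) - G p) - 'd G p w| <= e / (C + 1).
  by apply: Hd; rewrite gtr0_norm // t0 td.
apply: (le_trans (NL _ _)).
apply: (le_trans (ler_wpM2l C0 h)).
rewrite mulrCA -[leRHS]mulr1; apply: ler_wpM2l; [exact: ltW | by rewrite ler_pdivrMr // mul1r lerDl ler01].
Qed.

Lemma dlim_lower (V W : normedModType R) (G : V -> W) p w (N : W -> R) C c K :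
  differentiable G p -> 0 <= C ->
  (forall z1 z2, `|N z1 - N z2| <= C * `|z1 - z2|) ->
  (forall t, 0 < t < 1 -> c - K * t <= N (t^-1 *: (G (p + t *: w) - G p))) ->
  c <= N ('d G p w).
Proof.
move=> dG C0 NL hb; rewrite -lerN2.
apply: (@dlim_upper V W G p w (fun z => - N z) C (- c) K dG C0).
  by move=> z1 z2; rewrite -opprD normrN; exact: NL.
by move=> t t01; rewrite lerNl opprD opprK; exact: hb.
Qed.

End Lims.

Section Prob.
Variables (R : realType) (m n : nat) (f : 'cV[R]_m -> 'cV[R]_n -> R).
Variables (L1 L2 mu : R) (ystar : 'cV[R]_m -> 'cV[R]_n).
Hypothesis dF : forall p, differentiable (fjoint f) p.
Hypothesis dG : forall p, differentiable (gradjoint f) p.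

Local Notation F := (fjoint f).
Local Notation G := (gradjoint f).
Local Notation PT := ('cV[R]_m * 'cV[R]_n)%type.

Lemma fstD (z w : PT) : (z + w).1 = z.1 + w.1. Proof. by []. Qed.
Lemma sndD (z w : PT) : (z + w).2 = z.2 + w.2. Proof. by []. Qed.
Lemma pi1B i (z1 z2 : PT) : (z1 - z2).1 i 0 = z1.1 i 0 - z2.1 i 0.
Proof. by rewrite /= !mxE. Qed.
Lemma pi1Z i s (z : PT) : (s *: z).1 i 0 = s * z.1 i 0.
Proof. by rewrite /= !mxE. Qed.
Lemma pi1le i (z : PT) : `|z.1 i 0| <= `|z|.
Proof. exact: le_trans (entry_le_norm _ _ _) (norm_fst _). Qed.
Lemma pi2B i (z1 z2 : PT) : (z1 - z2).2 i 0 = z1.2 i 0 - z2.2 i 0.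
Proof. by rewrite /= !mxE. Qed.
Lemma pi2Z i s (z : PT) : (s *: z).2 i 0 = s * z.2 i 0.
Proof. by rewrite /= !mxE. Qed.
Lemma pi2le i (z : PT) : `|z.2 i 0| <= `|z|.
Proof. exact: le_trans (entry_le_norm _ _ _) (norm_snd _). Qed.

Lemma grad1E x y i : grad1 f x y i 0 = 'd F (x, y) (ebasis R i, 0).
Proof.
rewrite /grad1 mxE.
apply: (derive_via (G := F) (p := (x, y)) (w := (ebasis R i, 0)) (pi := id)) => //.
- by move=> t; rewrite /fjoint pairZ pairD /= scaler0 addr0 addrC.
Qed.

Lemma grad2E x y i : grad2 f x y i 0 = 'd F (x, y) (0, ebasis R i).
Proof.
rewrite /grad2 mxE.
apply: (derive_via (G := F) (p := (x, y)) (w := (0, ebasis R i)) (pi := id)) => //.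
- by move=> t; rewrite /fjoint pairZ pairD /= scaler0 addr0 addrC.
Qed.

Lemma hess11E x y i k : hess11 f x y i k = ('d G (x, y) (ebasis R k, 0)).1 i 0.
Proof.
rewrite /hess11 mxE.
apply: (derive_via (G := G) (p := (x, y)) (w := (ebasis R k, 0))
   (pi := fun z => z.1 i 0)) => //.
- exact: pi1B. - exact: pi1Z. - exact: pi1le.
- by move=> t; rewrite /gradjoint pairZ pairD /= scaler0 addr0 addrC.
Qed.

Lemma hess12E x y i k : hess12 f x y i k = ('d G (x, y) (0, ebasis R k)).1 i 0.
Proof.
rewrite /hess12 mxE.
apply: (derive_via (G := G) (p := (x, y)) (w := (0, ebasis R k))
   (pi := fun z => z.1 i 0)) => //.
- exact: pi1B. - exact: pi1Z. - exact: pi1le.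
- by move=> t; rewrite /gradjoint pairZ pairD /= scaler0 addr0 addrC.
Qed.

Lemma hess21E x y i k : hess21 f x y i k = ('d G (x, y) (ebasis R k, 0)).2 i 0.
Proof.
rewrite /hess21 mxE.
apply: (derive_via (G := G) (p := (x, y)) (w := (ebasis R k, 0))
   (pi := fun z => z.2 i 0)) => //.
- exact: pi2B. - exact: pi2Z. - exact: pi2le.
- by move=> t; rewrite /gradjoint pairZ pairD /= scaler0 addr0 addrC.
Qed.

Lemma hess22E x y i k : hess22 f x y i k = ('d G (x, y) (0, ebasis R k)).2 i 0.
Proof.
rewrite /hess22 mxE.
apply: (derive_via (G := G) (p := (x, y)) (w := (0, ebasis R k))
   (pi := fun z => z.2 i 0)) => //.
- exact: pi2B. - exact: pi2Z. - exact: pi2le.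
- by move=> t; rewrite /gradjoint pairZ pairD /= scaler0 addr0 addrC.
Qed.

Lemma col_decomp k (a : 'cV[R]_k) : a = \sum_i a i 0 *: ebasis R i.
Proof.
rewrite {1}(matrix_sum_delta a); apply: eq_bigr => i _.
by rewrite big_ord1.
Qed.

Lemma pair_decomp (a : 'cV[R]_m) (b : 'cV[R]_n) :
  (a, b) = \sum_k a k 0 *: (ebasis R k, 0 : 'cV[R]_n)
         + \sum_j b j 0 *: (0 : 'cV[R]_m, ebasis R j).
Proof.
have e1 : \sum_k a k 0 *: (ebasis R k, 0 : 'cV[R]_n) = (a, 0).
  rewrite [LHS]surjective_pairing fst_sum snd_sum; congr pair.
    by rewrite [RHS]col_decomp; apply: eq_bigr => i _; rewrite pairZ.
  by rewrite big1 // => i _; rewrite pairZ /= scaler0.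
have e2 : \sum_j b j 0 *: (0 : 'cV[R]_m, ebasis R j) = (0, b).
  rewrite [LHS]surjective_pairing fst_sum snd_sum; congr pair.
    by rewrite big1 // => i _; rewrite pairZ /= scaler0.
  by rewrite [RHS]col_decomp; apply: eq_bigr => i _; rewrite pairZ.
by rewrite e1 e2 pairD addr0 add0r.
Qed.

Lemma dlinE (W : normedModType R) (L : {linear PT -> W}) a b :
  L (a, b) = \sum_k a k 0 *: L (ebasis R k, 0) + \sum_j b j 0 *: L (0, ebasis R j).
Proof.
rewrite {1}pair_decomp linearD !linear_sum.
by congr (_ + _); apply: eq_bigr => i _; rewrite linearZ.
Qed.

Lemma dFE x y a b :
  'd F (x, y) (a, b) = dot (grad1 f x y) a + dot (grad2 f x y) b.
Proof.
rewrite dlinE; congr (_ + _); apply: eq_bigr => i _.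
  by rewrite grad1E mulrC.
by rewrite grad2E mulrC.
Qed.

Lemma dG1E x y a b :
  ('d G (x, y) (a, b)).1 = hess11 f x y *m a + hess12 f x y *m b.
Proof.
apply/matrixP => i j; rewrite (ord1 j) dlinE fstD !fst_sum [LHS]mxE [RHS]mxE.
rewrite [X in _ = X + _]mxE [X in _ = _ + X]mxE !summxE.
congr (_ + _); apply: eq_bigr => k _; rewrite pi1Z.
  by rewrite hess11E mulrC.
by rewrite hess12E mulrC.
Qed.

Lemma dG2E x y a b :
  ('d G (x, y) (a, b)).2 = hess21 f x y *m a + hess22 f x y *m b.
Proof.
apply/matrixP => i j; rewrite (ord1 j) dlinE sndD !snd_sum [LHS]mxE [RHS]mxE.
rewrite [X in _ = X + _]mxE [X in _ = _ + X]mxE !summxE.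
congr (_ + _); apply: eq_bigr => k _; rewrite pi2Z.
  by rewrite hess21E mulrC.
by rewrite hess22E mulrC.
Qed.

End Prob.

Section Prob2.
Variables (R : realType) (m n : nat) (f : 'cV[R]_m -> 'cV[R]_n -> R).
Variables (L1 mu : R) (ystar : 'cV[R]_m -> 'cV[R]_n).
Hypothesis dF : forall p, differentiable (fjoint f) p.
Hypothesis dG : forall p, differentiable (gradjoint f) p.
Hypothesis gradL : forall x y x' y',
     pnorm (grad1 f x y - grad1 f x' y') (grad2 f x y - grad2 f x' y')
       <= L1 * pnorm (x - x') (y - y').
Hypothesis mu0 : 0 < mu.
Hypothesis SC : forall x, strongly_concave mu (f x).
Hypothesis ymax : forall x y, f x y <= f x (ystar x).

Local Notation F := (fjoint f).
Local Notation G := (gradjoint f).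
Local Notation PT := ('cV[R]_m * 'cV[R]_n)%type.

Lemma enorm_rev k (a b : 'cV[R]_k) : `|enorm a - enorm b| <= enorm (a - b).
Proof.
have h1 := enormD (a - b) b; have h2 := enormD (b - a) a.
rewrite subrK in h1; rewrite subrK enormB in h2.
by rewrite ler_norml; apply/andP; split; lra.
Qed.

Lemma SC1 x a b :
  f x a <= f x b + dot (grad2 f x b) (a - b) - mu / 2 * enorm (a - b) ^+ 2.
Proof.
set d := a - b.
have key : f x a - f x b + mu / 2 * enorm d ^+ 2 <= 'd F (x, b) (0, d).
  apply: (@dlim_lower _ _ _ F (x, b) (0, d) id 1 _ (mu / 2 * enorm d ^+ 2) (dF (x, b))).
  - exact: ler01.
  - by move=> z1 z2; rewrite mul1r.
  move=> t /andP[t0 t1].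
  rewrite /fjoint pairZ pairD /= scaler0 addr0.
  have := SC x a b (introT andP (conj (ltW t0) (ltW t1))).
  have -> : t *: a + (1 - t) *: b = b + t *: d.
    by rewrite /d scalerBl scale1r scalerBr addrCA.
  move=> h.
  have -> : t^-1 *: (f x (b + t *: d) - f x b) = (f x (b + t *: d) - f x b) / t by rewrite [RHS]mulrC.
  rewrite ler_pdivlMr //.
  rewrite -/d in h; nra.
move: key; rewrite (dFE dF) dot0r add0r => key.
lra.
Qed.

Lemma fermat x : grad2 f x (ystar x) = 0.
Proof.
set y0 := ystar x; set g := grad2 f x y0.
have key : 'd F (x, y0) (0, g) <= 0.
  apply: (@dlim_upper _ _ _ F (x, y0) (0, g) id 1 _ 0 (dF (x, y0))).
  - exact: ler01.
  - by move=> z1 z2; rewrite mul1r.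
  move=> t /andP[t0 t1].
  rewrite /fjoint pairZ pairD /= scaler0 addr0 mul0r addr0.
  rewrite -[t^-1 *: _]/(t^-1 * _) pmulr_rle0 ?invr_gt0 // subr_le0.
  exact: ymax.
move: key; rewrite (dFE dF) dot0r add0r -enorm_sq => key.
apply: enorm_eq0; apply/eqP; rewrite -sqrf_eq0 eq_le key sqr_ge0 //.
Qed.

Lemma SM x a b :
  dot (grad2 f x a - grad2 f x b) (a - b) <= - mu * enorm (a - b) ^+ 2.
Proof.
have h1 := SC1 x a b; have h2 := SC1 x b a.
rewrite enormB -(opprB a b) dotNr in h2.
rewrite dotBl; lra.
Qed.

Lemma ystar_lip x x' :
  mu * enorm (ystar x - ystar x') <= `|L1| * enorm (x - x').
Proof.
set d := ystar x - ystar x'.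
have h1 := SM x (ystar x) (ystar x').
rewrite fermat sub0r dotNl -/d in h1.
have h2 : dot (grad2 f x (ystar x')) d <= `|L1| * enorm (x - x') * enorm d.
  have -> : grad2 f x (ystar x') = grad2 f x (ystar x') - grad2 f x' (ystar x').
    by rewrite (fermat x') subr0.
  apply: (le_trans (dot_CS' _ _)); apply: ler_wpM2r; first exact: enorm_ge0.
  apply: (le_trans (enorm_le_pnorm2 (grad1 f x (ystar x') - grad1 f x' (ystar x')) _)).
  apply: (le_trans (gradL _ _ _ _)); rewrite subrr pnorm0r.
  by apply: ler_wpM2r; [exact: enorm_ge0 | exact: ler_norm].
have e0 := enorm_ge0 d; have e1 := enorm_ge0 (x - x').
have [dz|dnz] := eqVneq (enorm d) 0.
  by rewrite dz mulr0 mulr_ge0.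
have dp : 0 < enorm d by rewrite lt_def dnz e0.
have : mu * enorm d * enorm d <= `|L1| * enorm (x - x') * enorm d.
  rewrite -mulrA -expr2; lra.
by rewrite ler_pM2r.
Qed.

Lemma negdef x y v : dot (hess22 f x y *m v) v <= - mu * enorm v ^+ 2.
Proof.
have -> : hess22 f x y *m v = ('d G (x, y) (0, v)).2 by rewrite (dG2E dG) mulmx0 add0r.
apply: (@dlim_upper _ _ _ G (x, y) (0, v) (fun z => dot z.2 v) (n%:R * enorm v) _ 0 (dG (x, y))).
- by rewrite mulr_ge0 ?enorm_ge0.
- move=> z1 z2; rewrite -dotBl.
  have -> : z1.2 - z2.2 = (z1 - z2).2 by [].
  apply: (le_trans (dot_CS _ _)); rewrite mulrAC ler_wpM2r ?enorm_ge0 //.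
  apply: (le_trans (enorm_le_norm _)); apply: ler_wpM2l => //; exact: norm_snd.
move=> t /andP[t0 t1].
rewrite /gradjoint pairZ pairD /= scaler0 addr0 dotZl mul0r addr0.
have h := SM x (y + t *: v) y.
have e : y + t *: v - y = t *: v by rewrite addrAC subrr add0r.
rewrite e dotZr enormZ gtr0_norm // in h.
rewrite -(ler_pM2l t0) mulrA mulfV ?gt_eqF // mul1r; nra.
Qed.

Lemma H12_bound x y v : enorm (hess12 f x y *m v) <= L1 * enorm v.
Proof.
have -> : hess12 f x y *m v = ('d G (x, y) (0, v)).1 by rewrite (dG1E dG) mulmx0 add0r.
apply: (@dlim_upper _ _ _ G (x, y) (0, v) (fun z => enorm z.1) m%:R _ 0 (dG (x, y))).
- exact: ler0n.
- move=> z1 z2; apply: (le_trans (enorm_rev _ _)).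
  have -> : z1.1 - z2.1 = (z1 - z2).1 by [].
  apply: (le_trans (enorm_le_norm _)); apply: ler_wpM2l => //; exact: norm_fst.
move=> t /andP[t0 t1].
rewrite /gradjoint pairZ pairD /= scaler0 addr0 mul0r addr0 enormZ gtr0_norm ?invr_gt0 //.
rewrite mulrC ler_pdivrMr //.
apply: (le_trans (enorm_le_pnorm1 _ (grad2 f x (y + t *: v) - grad2 f x y))).
apply: (le_trans (gradL _ _ _ _)); rewrite subrr pnorm0l addrAC subrr add0r enormZ gtr0_norm //.
by rewrite -mulrA (mulrC (enorm v)).
Qed.

Lemma H21_bound x y v : enorm (hess21 f x y *m v) <= L1 * enorm v.
Proof.
have -> : hess21 f x y *m v = ('d G (x, y) (v, 0)).2 by rewrite (dG2E dG) mulmx0 addr0.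
apply: (@dlim_upper _ _ _ G (x, y) (v, 0) (fun z => enorm z.2) n%:R _ 0 (dG (x, y))).
- exact: ler0n.
- move=> z1 z2; apply: (le_trans (enorm_rev _ _)).
  have -> : z1.2 - z2.2 = (z1 - z2).2 by [].
  apply: (le_trans (enorm_le_norm _)); apply: ler_wpM2l => //; exact: norm_snd.
move=> t /andP[t0 t1].
rewrite /gradjoint pairZ pairD /= scaler0 addr0 mul0r addr0 enormZ gtr0_norm ?invr_gt0 //.
rewrite mulrC ler_pdivrMr //.
apply: (le_trans (enorm_le_pnorm2 (grad1 f (x + t *: v) y - grad1 f x y) _)).
apply: (le_trans (gradL _ _ _ _)); rewrite subrr pnorm0r addrAC subrr add0r enormZ gtr0_norm //.
by rewrite -mulrA (mulrC (enorm v)).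
Qed.

End Prob2.

Section Inv.
Variable R : realType.

Lemma negdef_unit k (A : 'M[R]_k) mu : 0 < mu ->
  (forall v, dot (A *m v) v <= - mu * enorm v ^+ 2) -> A \in unitmx.
Proof.
move=> mu0 h.
have inj : forall v : 'cV[R]_k, A *m v = 0 -> v = 0.
  move=> v Av; have := h v; rewrite Av dot0l => hv.
  apply: enorm_eq0; apply/eqP; rewrite -sqrf_eq0 eq_le sqr_ge0 andbT.
  by rewrite -(ler_pM2l mu0) mulr0; lra.
rewrite -unitmx_tr -row_free_unit -kermx_eq0.
set K := kermx A^T; have KA : K *m A^T = 0 := mulmx_ker _.
apply/eqP/matrixP => i j; rewrite [RHS]mxE.
have : (row i K)^T = 0.
  apply: inj; rewrite -[A in A *m _]trmxK -trmx_mul -row_mul KA.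
  by apply/matrixP => a b; rewrite !mxE.
move/matrixP => /(_ j 0); rewrite !mxE.
done.
Qed.

Lemma negdef_inv k (A : 'M[R]_k) mu : 0 < mu ->
  (forall v, dot (A *m v) v <= - mu * enorm v ^+ 2) ->
  forall w, enorm (invmx A *m w) <= mu^-1 * enorm w.
Proof.
move=> mu0 h w; have Au := negdef_unit mu0 h.
set v := invmx A *m w.
have Av : A *m v = w by rewrite /v mulKVmx.
have := h v; rewrite Av => hv.
have cs := dot_CS w v.
have e0 := enorm_ge0 v; have ew := enorm_ge0 w.
rewrite mulrC ler_pdivlMr //.
have [ez|enz] := eqVneq (enorm v) 0; first by rewrite ez mul0r.
have vp : 0 < enorm v by rewrite lt_def enz e0.
rewrite -(ler_pM2r vp); move: cs; rewrite ler_norml => /andP[c1 c2].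
nra.
Qed.

Lemma opnorm_inv k (A : 'M[R]_k) mu : 0 < mu ->
  (forall v, dot (A *m v) v <= - mu * enorm v ^+ 2) ->
  opnorm (invmx A) <= mu^-1.
Proof.
move=> mu0 h; apply: opnorm_lub; first by rewrite invr_ge0 ltW.
exact: negdef_inv.
Qed.

Lemma opnorm_M3 p q r s (A : 'M[R]_(p, q)) (B : 'M[R]_(q, r)) (C : 'M[R]_(r, s)) a b c :
  opnorm A <= a -> opnorm B <= b -> opnorm C <= c ->
  opnorm (A *m B *m C) <= a * b * c.
Proof.
move=> ha hb hc; apply: (le_trans (opnormM _ _)).
apply: ler_pM; [exact: opnorm_ge0 | exact: opnorm_ge0 | | exact: hc].
apply: (le_trans (opnormM _ _)).
by apply: ler_pM; rewrite ?opnorm_ge0.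
Qed.

Lemma sub4 (V : zmodType) (a p a' p' : V) : (a - p) - (a' - p') = (a - a') - (p - p').
Proof. by rewrite opprB opprB addrACA [in RHS]addrACA (addrC (- p)). Qed.

Lemma tele3 (V : zmodType) (a b c d : V) : a - d = (a - b) + (b - c) + (c - d).
Proof. by rewrite !addrA !subrK. Qed.

End Inv.

Section Alg.
Variable R : realType.
Lemma G_lip_alg (p q : nat) (H H' : 'M[R]_p) (X X' : 'M[R]_(p,q)) (A A' : 'M[R]_q)
  (Z Z' : 'M[R]_(q,p)) (l1 l2 mu d : R) :
  0 < mu -> A \in unitmx -> A' \in unitmx ->
  opnorm (invmx A) <= mu^-1 -> opnorm (invmx A') <= mu^-1 ->
  opnorm X' <= l1 -> opnorm Z <= l1 ->
  opnorm (H - H') <= l2 * d -> opnorm (X - X') <= l2 * d ->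
  opnorm (Z - Z') <= l2 * d -> opnorm (A - A') <= l2 * d ->
  opnorm ((H - X *m invmx A *m Z) - (H' - X' *m invmx A' *m Z'))
    <= l2 * (1 + l1 / mu) ^+ 2 * d.
Proof.
move=> mu0 Au Au' iA iA' hX hZ h11 h12 h21 h22.
have dA : opnorm (A' - A) <= l2 * d.
  rewrite -opnormN opprB; exact: h22.
have eY : invmx A - invmx A' = invmx A *m (A' - A) *m invmx A'.
  rewrite mulmxBr mulmxBl (mulVmx Au) mul1mx -mulmxA (mulmxV Au') mulmx1.
  reflexivity.
have T : (X - X') *m invmx A *m Z + X' *m (invmx A - invmx A') *m Z
     + X' *m invmx A' *m (Z - Z') = X *m invmx A *m Z - X' *m invmx A' *m Z'.
  by rewrite !mulmxBl !mulmxBr !mulmxBl -tele3.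
rewrite sub4 -T.
have b1 : opnorm ((X - X') *m invmx A *m Z) <= l2 * d * mu^-1 * l1.
  by apply: opnorm_M3.
have b2 : opnorm (X' *m (invmx A - invmx A') *m Z) <= l1 * (mu^-1 * (l2 * d) * mu^-1) * l1.
  apply: opnorm_M3 => //.
  by rewrite eY; apply: opnorm_M3.
have b3 : opnorm (X' *m invmx A' *m (Z - Z')) <= l1 * mu^-1 * (l2 * d).
  by apply: opnorm_M3.
have t1 := opnormB (H - H')
  ((X - X') *m invmx A *m Z + X' *m (invmx A - invmx A') *m Z
     + X' *m invmx A' *m (Z - Z')).
have t2 := opnormD ((X - X') *m invmx A *m Z + X' *m (invmx A - invmx A') *m Z)
     (X' *m invmx A' *m (Z - Z')).
have t3 := opnormD ((X - X') *m invmx A *m Z) (X' *m (invmx A - invmx A') *m Z).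
have eq : l2 * d + l2 * d * mu^-1 * l1 + l1 * (mu^-1 * (l2 * d) * mu^-1) * l1
          + l1 * mu^-1 * (l2 * d) = l2 * (1 + l1 / mu) ^+ 2 * d.
  by field; rewrite gt_eqF.
lra.
Qed.
End Alg.

Section Part1.
Variables (R : realType) (m n : nat) (f : 'cV[R]_m -> 'cV[R]_n -> R).
Variables (L1 L2 mu : R).
Hypothesis dF : forall p, differentiable (fjoint f) p.
Hypothesis dG : forall p, differentiable (gradjoint f) p.
Hypothesis gradL : forall x y x' y',
     pnorm (grad1 f x y - grad1 f x' y') (grad2 f x y - grad2 f x' y')
       <= L1 * pnorm (x - x') (y - y').
Hypothesis mu0 : 0 < mu.
Hypothesis SC : forall x, strongly_concave mu (f x).
Hypothesis hessL : forall x y x' y',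
     opnorm (hess11 f x y - hess11 f x' y') <= L2 * pnorm (x - x') (y - y') /\
     opnorm (hess12 f x y - hess12 f x' y') <= L2 * pnorm (x - x') (y - y') /\
     opnorm (hess21 f x y - hess21 f x' y') <= L2 * pnorm (x - x') (y - y') /\
     opnorm (hess22 f x y - hess22 f x' y') <= L2 * pnorm (x - x') (y - y').
Hypothesis L10 : 0 <= L1.

Lemma negdef' x y v : dot (hess22 f x y *m v) v <= - mu * enorm v ^+ 2.
Proof. exact: (negdef dF dG SC). Qed.

Lemma opH12 x y : opnorm (hess12 f x y) <= L1.
Proof. by apply: opnorm_lub => // v; exact: (H12_bound dG gradL). Qed.

Lemma opH21 x y : opnorm (hess21 f x y) <= L1.
Proof. by apply: opnorm_lub => // v; exact: (H21_bound dG gradL). Qed.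

Lemma G_lip x y x' y' :
  opnorm (Gmat f x y - Gmat f x' y')
    <= L2 * (1 + L1 / mu) ^+ 2 * pnorm (x - x') (y - y').
Proof.
have [h11 [h12 [h21 h22]]] := hessL x y x' y'.
apply: (G_lip_alg mu0 (negdef_unit mu0 (@negdef' x y)) (negdef_unit mu0 (@negdef' x' y'))
  (opnorm_inv mu0 (@negdef' x y)) (opnorm_inv mu0 (@negdef' x' y'))
  (opH12 x' y') (opH21 x y) h11 h12 h21 h22).
Qed.

End Part1.

Section DotLin.
Variables (R : realType) (k : nat) (g : 'cV[R]_k).
Definition dotfun (h : 'cV[R]_k) : R := dot g h.
Lemma dotfun_is_linear : linear dotfun.
Proof. by move=> a u v; rewrite /dotfun dotDr dotZr. Qed.
HB.instance Definition _ := GRing.isLinear.Build R 'cV[R]_k R *:%R dotfun dotfun_is_linear.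
End DotLin.

Section FstLin.
Variables (R : realType) (m n : nat).
Definition fstf (z : 'cV[R]_m * 'cV[R]_n) : 'cV[R]_m := z.1.
Lemma fstf_is_linear : linear fstf.
Proof. by []. Qed.
HB.instance Definition _ := GRing.isLinear.Build R ('cV[R]_m * 'cV[R]_n)%type 'cV[R]_m *:%R fstf fstf_is_linear.
Lemma fstf_cont : continuous fstf.
Proof. by apply: (@bounded_cont _ _ _ fstf 1) => z; rewrite mul1r; exact: norm_fst. Qed.
End FstLin.

Lemma dot_ebasis (R : realType) k (g : 'cV[R]_k) i : dot g (ebasis R i) = g i 0.
Proof.
rewrite /dot (bigD1 i) //= big1 ?addr0; first by rewrite /ebasis mxE !eqxx mulr1.
by move=> j ji; rewrite /ebasis mxE (negPf ji) mulr0.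
Qed.

Lemma mul_ebasis (R : realType) p k (M : 'M[R]_(p, k)) i j : (M *m ebasis R j) i 0 = M i j.
Proof. by rewrite /ebasis -colE mxE. Qed.

Section Part2.
Variables (R : realType) (m n : nat) (f : 'cV[R]_m -> 'cV[R]_n -> R).
Variables (L1 mu : R) (ystar : 'cV[R]_m -> 'cV[R]_n).
Hypothesis dF : forall p, differentiable (fjoint f) p.
Hypothesis dG : forall p, differentiable (gradjoint f) p.
Hypothesis gradL : forall x y x' y',
     pnorm (grad1 f x y - grad1 f x' y') (grad2 f x y - grad2 f x' y')
       <= L1 * pnorm (x - x') (y - y').
Hypothesis mu0 : 0 < mu.
Hypothesis SC : forall x, strongly_concave mu (f x).
Hypothesis ymax : forall x y, f x y <= f x (ystar x).

Local Notation F := (fjoint f).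
Local Notation G := (gradjoint f).

Lemma ylip x x' : enorm (ystar x - ystar x') <= `|L1| / mu * enorm (x - x').
Proof.
have := ystar_lip dF gradL SC ymax x x'.
by rewrite mulrAC ler_pdivlMr // mulrC.
Qed.

Lemma Phi_eq x : Phi f x = f x (ystar x).
Proof.
rewrite /Phi; apply/eqP; rewrite eq_le; apply/andP; split.
  apply: ge_sup; first by exists (f x (ystar x)); exists (ystar x).
  by move=> z [y _ <-]; exact: ymax.
apply: sup_upper_bound; last by exists (ystar x).
split; first by exists (f x (ystar x)); exists (ystar x).
by exists (f x (ystar x)) => z [y _ <-]; exact: ymax.
Qed.

Lemma xhx (x h : 'cV[R]_m) : x + h - x = h.
Proof. by rewrite addrAC subrr add0r. Qed.

Lemma dPhi x : differentiable (Phi f) x /\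
  'd (Phi f) x = dotfun (grad1 f x (ystar x)) :> (_ -> _).
Proof.
set y0 := ystar x; set g1 := grad1 f x y0.
apply: diff_build.
  apply: (@bounded_cont _ _ _ (dotfun g1) (enorm g1 * m%:R)) => h.
  rewrite /dotfun; apply: (le_trans (dot_CS _ _)); rewrite -mulrA.
  by apply: ler_wpM2l; [exact: enorm_ge0 | exact: enorm_le_norm].
move=> e e0.
set K := `|L1| * (`|L1| / mu).
have K0 : 0 <= K.
  by apply: mulr_ge0; [exact: normr_ge0 | apply: divr_ge0; [exact: normr_ge0 | exact: ltW]].
set Km := K * (m%:R) ^+ 2.
have Km0 : 0 <= Km by apply: mulr_ge0 => //; exact: sqr_ge0.
have e2 : 0 < e / 2 by rewrite divr_gt0.
have [d1 d10 Hd1] := dlittle (dF (x, y0)) e2.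
have Km1 : 0 < Km + 1 by lra.
have c0 : 0 < e / 2 / (Km + 1) by rewrite divr_gt0.
exists (Num.min d1 (e / 2 / (Km + 1))); first by rewrite lt_min d10 c0.
move=> h; rewrite lt_min => /andP[hd1 hd2].
change (`|Phi f (x + h) - Phi f x - dot g1 h| <= e * `|h|).
set y1 := ystar (x + h).
have nz : `|(h, 0 : 'cV[R]_n)| = `|h| by rewrite prod_normE normr0 max_l ?normr_ge0.
have r1 := Hd1 (h, 0); rewrite nz in r1; have {r1} r1 := r1 hd1.
rewrite (dFE dF) dot0r addr0 /fjoint pairD /= addr0 in r1.
rewrite !Phi_eq -/y1 -/y0.
have lo : f (x + h) y0 <= f (x + h) y1 := ymax _ _.
have a1 : enorm (grad2 f (x + h) y0 - grad2 f x y0) <= `|L1| * enorm h.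
  apply: (le_trans (enorm_le_pnorm2 (grad1 f (x + h) y0 - grad1 f x y0) _)).
  apply: (le_trans (gradL _ _ _ _)); rewrite subrr pnorm0r xhx.
  by apply: ler_wpM2r; [exact: enorm_ge0 | exact: ler_norm].
have a2 : enorm (y1 - y0) <= `|L1| / mu * enorm h.
  by have := ylip (x + h) x; rewrite xhx.
have s2 : dot (grad2 f (x + h) y0) (y1 - y0) <= K * enorm h ^+ 2.
  have -> : grad2 f (x + h) y0 = grad2 f (x + h) y0 - grad2 f x y0.
    by rewrite /y0 (fermat dF ymax x) subr0.
  apply: (le_trans (dot_CS' _ _)).
  apply: (le_trans (ler_pM (enorm_ge0 _) (enorm_ge0 _) a1 a2)).
  by rewrite /K expr2 mulrACA.
have up : f (x + h) y1 <= f (x + h) y0 + K * enorm h ^+ 2.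
  have s1 := SC1 dF SC (x + h) y1 y0.
  have : 0 <= mu / 2 * enorm (y1 - y0) ^+ 2.
    by apply: mulr_ge0; [apply: divr_ge0; [exact: ltW | by []] | exact: sqr_ge0].
  lra.
have eh : K * enorm h ^+ 2 <= Km * `|h| ^+ 2.
  rewrite /Km -mulrA -exprMn; apply: ler_wpM2l => //.
  by rewrite lerXn2r ?nnegrE ?enorm_ge0 ?mulr_ge0 // enorm_le_norm.
have eh2 : Km * `|h| ^+ 2 <= e / 2 * `|h|.
  rewrite expr2 mulrA; apply: ler_wpM2r; first exact: normr_ge0.
  have hlt : `|h| <= e / 2 / (Km + 1) by exact: ltW.
  apply: (le_trans (ler_wpM2l Km0 hlt)).
  by rewrite mulrCA; apply: ler_piMr; [exact: ltW | rewrite ler_pdivrMr // mul1r lerDl].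
move: r1; rewrite ler_norml => /andP[r1 r2].
rewrite ler_norml; apply/andP; split; lra.
Qed.

Lemma gradx_eq x : gradx (Phi f) x = grad1 f x (ystar x).
Proof.
apply/matrixP => i j; rewrite (ord1 j) /gradx mxE (deriveE _ (dPhi x).1) (dPhi x).2.
exact: dot_ebasis.
Qed.

Definition Dm x := - (invmx (hess22 f x (ystar x)) *m hess21 f x (ystar x)).

Lemma dystar x : differentiable ystar x /\ 'd ystar x = mulmx (Dm x) :> (_ -> _).
Proof.
set y0 := ystar x; set H := hess22 f x y0; set H21 := hess21 f x y0.
have nd := negdef dF dG SC x y0.
have Hu : H \in unitmx := negdef_unit mu0 nd.
have Hi : forall w, enorm (invmx H *m w) <= mu^-1 * enorm w := negdef_inv mu0 nd.
apply: diff_build.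
  apply: (@bounded_cont _ _ _ (mulmx (Dm x)) (opnorm (Dm x) * m%:R)) => h.
  apply: (le_trans (norm_le_enorm _)); apply: (le_trans (opnorm_le _ _)).
  by rewrite -mulrA; apply: ler_wpM2l; [exact: opnorm_ge0 | exact: enorm_le_norm].
move=> e e0.
set C1 := 1 + `|L1| / mu * m%:R.
have C10 : 0 <= `|L1| / mu * m%:R.
  by apply: mulr_ge0 => //; apply: divr_ge0; [exact: normr_ge0 | exact: ltW].
have C1p : 0 < C1 by rewrite /C1; lra.
set Ci := mu^-1 * n%:R.
have Ci0 : 0 <= Ci by apply: mulr_ge0 => //; rewrite invr_ge0 ltW.
have Cp : 0 < Ci * C1 + 1 by have := mulr_ge0 Ci0 (ltW C1p); lra.
have e'0 : 0 < e / (Ci * C1 + 1) by rewrite divr_gt0.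
have [d1 d10 Hd1] := dlittle (dG (x, y0)) e'0.
exists (d1 / C1); first by rewrite divr_gt0.
move=> h hd.
change (`|ystar (x + h) - ystar x - Dm x *m h| <= e * `|h|).
set y1 := ystar (x + h); set dl := y1 - y0.
have dln : `|dl| <= `|L1| / mu * m%:R * `|h|.
  apply: (le_trans (norm_le_enorm _)); apply: (le_trans (ylip _ _)); rewrite xhx -[leRHS]mulrA.
  apply: ler_wpM2l; last exact: enorm_le_norm.
  by apply: divr_ge0; [exact: normr_ge0 | exact: ltW].
have zn : `|(h, dl)| <= C1 * `|h|.
  rewrite prod_normE ge_max; apply/andP; split.
    by rewrite /C1 mulrDl mul1r lerDl mulr_ge0.
  by apply: (le_trans dln); rewrite /C1 mulrDl mul1r lerDr.
have zd : `|(h, dl)| < d1.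
  by apply: (le_lt_trans zn); rewrite mulrC -ltr_pdivlMr.
have r := Hd1 _ zd.
set r0 := gradjoint f ((x, y0) + (h, dl)) - gradjoint f (x, y0) - 'd (gradjoint f) (x, y0) (h, dl).
have r2E : r0.2 = - (H21 *m h + H *m dl).
  have e1 : y0 + dl = y1 by rewrite /dl addrC subrK.
  rewrite /r0 /= e1 /y1 (fermat dF ymax (x + h)) (fermat dF ymax x) (dG2E dG).
  by rewrite subrr sub0r.
have key : y1 - y0 - Dm x *m h = - (invmx H *m r0.2).
  rewrite r2E mulmxN opprK mulmxDr mulKmx // /Dm -/y0 -/H -/H21 mulNmx opprK mulmxA.
  by rewrite addrC.
rewrite -/y0 key normrN.
apply: (le_trans (norm_le_enorm _)); apply: (le_trans (Hi _)).
have r2n : enorm r0.2 <= n%:R * (e / (Ci * C1 + 1) * `|(h, dl)|).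
  apply: (le_trans (enorm_le_norm _)); apply: ler_wpM2l => //.
  exact: (le_trans (norm_snd _) r).
apply: (le_trans (ler_wpM2l _ r2n)); first by rewrite invr_ge0 ltW.
have E1 : mu^-1 * (n%:R * (e / (Ci * C1 + 1) * `|(h, dl)|))
    = (Ci * (e / (Ci * C1 + 1))) * `|(h, dl)| by rewrite /Ci; ring.
rewrite E1.
have ce0 : 0 <= Ci * (e / (Ci * C1 + 1)) by apply: mulr_ge0 => //; exact: ltW.
apply: (le_trans (ler_wpM2l ce0 zn)).
rewrite mulrA; apply: ler_wpM2r; first exact: normr_ge0.
have E2 : Ci * (e / (Ci * C1 + 1)) * C1 = e * (Ci * C1) / (Ci * C1 + 1).
  by field; rewrite gt_eqF.
rewrite E2 ler_pdivrMr //; apply: ler_wpM2l; first exact: ltW.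
by rewrite lerDl.
Qed.

Lemma gradx_fun :
  gradx (Phi f) = (@fstf R m n) \o (gradjoint f \o (fun x' => (x', ystar x'))).
Proof. by apply: funext => x'; rewrite gradx_eq. Qed.

Lemma dpair x : differentiable (fun x' => (x', ystar x')) x.
Proof.
apply: (@differentiable_pair _ _ _ _ id ystar x); last exact: (dystar x).1.
by [].
Qed.

Lemma dgradx x : differentiable (gradx (Phi f)) x.
Proof.
rewrite gradx_fun; apply: differentiable_comp.
  by apply: differentiable_comp; [exact: dpair | exact: dG].
by apply: linear_differentiable; exact: (@fstf_cont R m n).
Qed.

Lemma hessx_eq x : hessx (Phi f) x = Gmat f x (ystar x).
Proof.
apply/matrixP => i k; rewrite /hessx mxE.
rewrite (derive_via (G := gradx (Phi f)) (p := x) (w := ebasis R k)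
   (pi := fun z => z i 0) (dgradx x)); first last.
- by [].
- by move=> t; rewrite addrC.
- by move=> z; exact: entry_le_norm.
- by move=> s z; rewrite !mxE.
- by move=> z1 z2; rewrite !mxE.
have d1 : differentiable (gradjoint f \o (fun x' => (x', ystar x'))) x.
  by apply: differentiable_comp; [exact: dpair | exact: dG].
rewrite gradx_fun (diff_comp d1); last first.
  by apply: linear_differentiable; exact: (@fstf_cont R m n).
rewrite (diff_lin _ (@fstf_cont R m n)) /=.
rewrite (diff_comp (dpair x) (dG _)) /=.
rewrite (diff_pair _ (dystar x).1) //= (dystar x).2.
have -> : 'd id x (ebasis R k) = ebasis R k by rewrite diff_val.
rewrite /fstf (dG1E dG) mulmxA -mulmxDl mul_ebasis /Gmat /Dm mulmxN mulmxA.
by [].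
Qed.

End Part2.

Lemma ebasis_neq0 (R : realType) k (i : 'I_k) : 0 < enorm (ebasis R i).
Proof.
rewrite lt_def enorm_ge0 andbT; apply/eqP => /enorm_eq0 /matrixP /(_ i 0).
by rewrite /ebasis !mxE !eqxx /= => /eqP; rewrite oner_eq0.
Qed.

Unset Implicit Arguments.

Theorem proposition2 (R : realType) (m n : nat)
  (f : 'cV[R]_m -> 'cV[R]_n -> R) (L1 L2 mu : R)
  (ystar : 'cV[R]_m -> 'cV[R]_n) :
  standing_assumption f L1 L2 mu ->
  (forall x y, f x y <= f x (ystar x)) ->
  let kappa := L1 / mu in
  (* (1) G is Lipschitz with L_G = L2 (1 + kappa)^2 *)
  (forall x y x' y',
     opnorm (Gmat f x y - Gmat f x' y')
       <= L2 * (1 + kappa) ^+ 2 * pnorm (x - x') (y - y')) /\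
  (* (2) Phi is twice differentiable, Hessian = G(x, y*(x)), Lipschitz *)
  (forall x, differentiable (Phi f) x) /\
  (forall x, differentiable (gradx (Phi f)) x) /\
  (forall x, hessx (Phi f) x = Gmat f x (ystar x)) /\
  (forall x x',
     opnorm (hessx (Phi f) x - hessx (Phi f) x')
       <= L2 * (1 + kappa) ^+ 2 * (1 + kappa) * enorm (x - x')).
Proof.
move=> [[dF [dG _]] [gradL [mu0 [SC [hessL _]]]]] ymax kappa.
have part2 : (forall x, differentiable (Phi f) x) /\
  (forall x, differentiable (gradx (Phi f)) x) /\
  (forall x, hessx (Phi f) x = Gmat f x (ystar x)).
  split; first by move=> x; exact: (dPhi dF gradL mu0 SC ymax x).1.
  split; first by move=> x; exact: (dgradx dF dG gradL mu0 SC ymax x).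
  by move=> x; exact: (hessx_eq dF dG gradL mu0 SC ymax x).
have [mn0|mnp] := posnP (m + n)%N.
  move/eqP: mn0; rewrite addn_eq0 => /andP[/eqP m0 /eqP n0].
  subst m n.
  split.
    move=> x y x' y'; rewrite (flatmx0 (Gmat f x y - Gmat f x' y')) opnorm0.
    by rewrite (flatmx0 (x - x')) (flatmx0 (y - y')) pnorm0l enorm0 mulr0.
  split; first exact: part2.1.
  split; first exact: part2.2.1.
  split; first exact: part2.2.2.
  move=> x x'; rewrite (flatmx0 (hessx (Phi f) x - hessx (Phi f) x')) opnorm0.
  by rewrite (flatmx0 (x - x')) enorm0 mulr0.
have [P [x0 [x0' [y0 [y0' P0]]]]] : exists P : R, exists (x x' : 'cV[R]_m) (y y' : 'cV[R]_n),
    0 < P /\ P = pnorm (x - x') (y - y').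
  have [m0|mp] := posnP m.
    by rewrite m0 add0n in mnp; exists (enorm (ebasis R (Ordinal mnp))), 0, 0,
      (ebasis R (Ordinal mnp)), 0; rewrite ebasis_neq0 !subr0 pnorm0l.
  exists (enorm (ebasis R (Ordinal mp))), (ebasis R (Ordinal mp)), 0, 0, 0.
  by rewrite ebasis_neq0 !subr0 pnorm0r.
case: P0 => Pp PE.
have L10 : 0 <= L1.
  have h := gradL x0 y0 x0' y0'; rewrite -PE in h.
  by rewrite -(pmulr_lge0 _ Pp); apply: le_trans h; exact: pnorm_ge0.
have L20 : 0 <= L2.
  have [h _] := hessL x0 y0 x0' y0'; rewrite -PE in h.
  by rewrite -(pmulr_lge0 _ Pp); apply: le_trans h; exact: opnorm_ge0.
have k0 : 0 <= kappa by rewrite /kappa divr_ge0 // ltW.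
have part1 := G_lip dF dG gradL mu0 SC hessL L10.
split; first exact: part1.
split; first exact: part2.1.
split; first exact: part2.2.1.
split; first exact: part2.2.2.
move=> x x'; rewrite !part2.2.2.
apply: (le_trans (part1 _ _ _ _)).
rewrite -/kappa -[leRHS]mulrA; apply: ler_wpM2l; first by apply: mulr_ge0 => //; exact: sqr_ge0.
apply: (le_trans (pnorm_le_add _ _)).
have := ylip dF gradL mu0 SC ymax x x'; rewrite ger0_norm // -/kappa => h.
rewrite mulrDl mul1r; lra.
Qed.
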